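(* Let $\mathsf{UnivT},\mathsf{StrongT},\mathsf{LexT},\mathsf{WeakT}$ denote the classes of universally truthful, strongly truthful, lex-truthful and weakly truthful randomized mechanisms, respectively. Then in every ordinal setting $\mathsf{UnivT}\subseteq\mathsf{StrongT}\subseteq\mathsf{LexT}\subseteq\mathsf{WeakT}$, and each of these inclusions is strict: for each inclusion there exists an ordinal setting (in which every agent may report any strict total order on the outcomes) and a mechanism belonging to the larger class but not the smaller one.
   Context: An ordinal setting: a set $N$ of $n$ agents, a finite set $O$ of $m$ outcomes, and for each agent $j$ a set $\Sigma_j$ of allowed strict total orders on $O$; $\Sigma=\prod_j\Sigma_j$. For a strict order $\succ$, $\succ(\ell)$ denotes its $\ell$-th ranked outcome. A deterministic mechanism (social choice function) $f:\Sigma\to O$ is truthful if $f(\succ_j,\succ_{-j})\succeq_j f(\succ'_j,\succ_{-j})$ for all $j$, all $\succ_j,\succ'_j\in\Sigma_j$, all $\succ_{-j}$ (where $a\succeq_j b$ means $a\succ_j b$ or $a=b$). A randomized mechanism maps each profile to a probability distribution (lottery) over $O$. It is universally truthful if it is a mixture of deterministic truthful mechanisms with input-independent mixture weights. For a strict order $\succ$ and lotteries $p,q$: $p$ stochastically dominates $q$ w.r.t. $\succ$ if $\sum_{\ell\le i}p(\succ(\ell))\ge\sum_{\ell\le i}q(\succ(\ell))$ for all $i\in[m]$; for $p\ne q$, $p$ lexicographically dominates $q$ w.r.t. $\succ$ if there is $i\in[m]$ with $p(\succ(i))>q(\succ(i))$ and $p(\succ(\ell))=q(\succ(\ell))$ for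 all $\ell<i$. A randomized mechanism $\mathcal{M}$ is strongly truthful if $\mathcal{M}(\succ_j,\succ_{-j})$ stochastically dominates $\mathcal{M}(\succ'_j,\succ_{-j})$ w.r.t. $\succ_j$ for all $j,\succ_j,\succ'_j,\succ_{-j}$; weakly truthful if $\mathcal{M}(\succ_j,\succ_{-j})$ is not stochastically dominated by $\mathcal{M}(\succ'_j,\succ_{-j})$ w.r.t. $\succ_j$ for all such data; lex-truthful if for all such data either $\mathcal{M}(\succ_j,\succ_{-j})=\mathcal{M}(\succ'_j,\succ_{-j})$ or $\mathcal{M}(\succ_j,\succ_{-j})$ lexicographically dominates $\mathcal{M}(\succ'_j,\succ_{-j})$ w.r.t. $\succ_j$. *)

(* Defs.v *)
From HB Require Import structures.
From mathcomp Require Import all_boot all_order all_algebra.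
From mathcomp Require Import reals.
Set Implicit Arguments. Unset Strict Implicit. Unset Printing Implicit Defensive.
Import Order.TTheory GRing.Theory Num.Theory.
Local Open Scope ring_scope.

(* A strict total order on the finite outcome set O (with m = #|O|) is
   represented by its ranking: an injective (hence bijective) map
   'I_m -> O sending l to the l-th ranked outcome  >(l)  (0-indexed). *)
Definition sorder (O : finType) := {f : {ffun 'I_#|O| -> O} | injectiveb f}.

Definition ranked (O : finType) (r : sorder O) (l : 'I_#|O|) : O := val r l.

Definition weakly_prefers (O : finType) (r : sorder O) (a b : O) : bool :=
  (a == b) || [exists l1 : 'I_#|O|, exists l2 : 'I_#|O|,
     [&& (l1 < l2)%N, ranked r l1 == a & ranked r l2 == b]].

Definition profile (n : nat) (O : finType) := {ffun 'I_n -> sorder O}.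

Definition upd n (O : finType) (s : profile n O) (j : 'I_n) (r : sorder O)
  : profile n O := [ffun i => if i == j then r else s i].

Definition in_setting n (O : finType) (Sg : 'I_n -> {set sorder O})
  (s : profile n O) : Prop := forall j, s j \in Sg j.

Definition full_setting n (O : finType) : 'I_n -> {set sorder O} :=
  fun _ => setT.

Definition lottery (R : realType) (O : finType) (p : {ffun O -> R}) : Prop :=
  (forall x, 0 <= p x) /\ \sum_(x : O) p x = 1.

Definition rand_mechanism (R : realType) n (O : finType)
  (Sg : 'I_n -> {set sorder O}) (M : profile n O -> {ffun O -> R}) : Prop :=
  forall s, in_setting Sg s -> lottery (M s).

Definition det_truthful n (O : finType) (Sg : 'I_n -> {set sorder O})
  (f : profile n O -> O) : Prop :=
  forall s, in_setting Sg s -> forall (j : 'I_n) (r' : sorder O), r' \in Sg j ->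
    weakly_prefers (s j) (f s) (f (upd s j r')).

Definition sd_dom (R : realType) (O : finType) (r : sorder O)
  (p q : {ffun O -> R}) : Prop :=
  forall i : 'I_#|O|,
    \sum_(l < #|O| | (l <= i)%N) q (ranked r l)
      <= \sum_(l < #|O| | (l <= i)%N) p (ranked r l).

Definition lex_dom (R : realType) (O : finType) (r : sorder O)
  (p q : {ffun O -> R}) : Prop :=
  p <> q /\
  exists i : 'I_#|O|, q (ranked r i) < p (ranked r i) /\
    forall l : 'I_#|O|, (l < i)%N -> p (ranked r l) = q (ranked r l).

Definition UnivT (R : realType) n (O : finType) (Sg : 'I_n -> {set sorder O})
  (M : profile n O -> {ffun O -> R}) : Prop :=
  rand_mechanism Sg M /\
  exists (k : nat) (w : 'I_k -> R) (f : 'I_k -> profile n O -> O),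
    [/\ (forall t, 0 <= w t), \sum_(t < k) w t = 1,
        (forall t, det_truthful Sg (f t)) &
        (forall s, in_setting Sg s -> forall x : O,
            M s x = \sum_(t < k | f t s == x) w t)].

Definition StrongT (R : realType) n (O : finType) (Sg : 'I_n -> {set sorder O})
  (M : profile n O -> {ffun O -> R}) : Prop :=
  rand_mechanism Sg M /\
  forall s, in_setting Sg s -> forall (j : 'I_n) (r' : sorder O), r' \in Sg j ->
    sd_dom (s j) (M s) (M (upd s j r')).

Definition LexT (R : realType) n (O : finType) (Sg : 'I_n -> {set sorder O})
  (M : profile n O -> {ffun O -> R}) : Prop :=
  rand_mechanism Sg M /\
  forall s, in_setting Sg s -> forall (j : 'I_n) (r' : sorder O), r' \in Sg j ->
    M s = M (upd s j r') \/ lex_dom (s j) (M s) (M (upd s j r')).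

Definition WeakT (R : realType) n (O : finType) (Sg : 'I_n -> {set sorder O})
  (M : profile n O -> {ffun O -> R}) : Prop :=
  rand_mechanism Sg M /\
  forall s, in_setting Sg s -> forall (j : 'I_n) (r' : sorder O), r' \in Sg j ->
    ~ (sd_dom (s j) (M (upd s j r')) (M s) /\ M (upd s j r') <> M s).

(* Main.v *)
Require Import Defs.
From HB Require Import structures.
From mathcomp Require Import all_boot all_order all_algebra.
From mathcomp Require Import reals.
From mathcomp Require Import lra zify.
Set Implicit Arguments. Unset Strict Implicit. Unset Printing Implicit Defensive.
Import Order.TTheory GRing.Theory Num.Theory.
Local Open Scope ring_scope.

Section Gen.
Variable O : finType.

Lemma ranked_inj (r : sorder O) : injective (ranked r).
Proof. case: r => f Hf; rewrite /ranked /=; exact/injectiveP. Qed.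

Lemma ranked_bij (r : sorder O) : bijective (ranked r).
Proof. have := inj_card_bij (@ranked_inj r); rewrite card_ord leqnn; exact. Qed.

Definition rk (r : sorder O) (x : O) : nat :=
  if [pick l | ranked r l == x] is Some l then val l else 0%N.

Lemma rk_eq (r : sorder O) l x : ranked r l = x -> rk r x = l.
Proof.
move=> <-; rewrite /rk; case: pickP => [l' /eqP /ranked_inj -> //|].
by move/(_ l); rewrite eqxx.
Qed.

Lemma rkK (r : sorder O) l : rk r (ranked r l) = l.
Proof. exact: rk_eq. Qed.

Lemma ranked_surj (r : sorder O) x : exists l, ranked r l = x.
Proof. have [g _ K] := ranked_bij r; by exists (g x). Qed.

Lemma rk_lt (r : sorder O) x : (rk r x < #|O|)%N.
Proof. have [l <-] := ranked_surj r x; by rewrite rkK. Qed.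

Lemma rk_inj (r : sorder O) x y : rk r x = rk r y -> x = y.
Proof.
have [l <-] := ranked_surj r x; have [l' <-] := ranked_surj r y.
by rewrite !rkK => /val_inj ->.
Qed.

Lemma wp_rk (r : sorder O) x y : weakly_prefers r x y -> (rk r x <= rk r y)%N.
Proof.
case/orP => [/eqP -> //|/existsP [l1 /existsP [l2 /and3P [H /eqP <- /eqP <-]]]].
by rewrite !rkK ltnW.
Qed.

Variable R : realType.

Lemma sum_reindex (r : sorder O) (P : pred nat) (F : O -> R) :
  \sum_(l < #|O| | P (val l)) F (ranked r l) = \sum_(x | P (rk r x)) F x.
Proof.
have [g K1 K2] := ranked_bij r.
rewrite (reindex (ranked r)) /=; last by exists g => x _.
by apply: eq_bigl => l; rewrite rkK.
Qed.

Lemma sum_pick (P : pred O) (a : O) (v : R) :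
  \sum_(x | P x) (if x == a then v else 0) = if P a then v else 0.
Proof.
case Pa: (P a).
  rewrite (bigD1 a) //= eqxx big1 ?addr0 // => x /andP [_ /negbTE ->] //.
by apply: big1 => x Px; case: eqP => // Ex; rewrite -Ex Px in Pa.
Qed.

Lemma split_sum k (F : 'I_k -> R) (i : 'I_k) :
  \sum_(l < k | (l <= i)%N) F l = \sum_(l < k | (l < i)%N) F l + F i.
Proof.
rewrite (bigD1 i) //= addrC; congr (_ + _); apply: eq_bigl => l.
by rewrite ltn_neqAle andbC val_eqE.
Qed.

Lemma sum_le_total (I : finType) (P : pred I) (F : I -> R) :
  (forall x, 0 <= F x) -> \sum_(x | P x) F x <= \sum_x F x.
Proof.
move=> H; rewrite [X in _ <= X](bigID P) /= lerDl; exact: sumr_ge0.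
Qed.

End Gen.

Section Parts.
Variable R : realType.

Lemma in_upd n (O : finType) (Sg : 'I_n -> {set sorder O}) s j r' :
  in_setting Sg s -> r' \in Sg j -> in_setting Sg (upd s j r').
Proof. by move=> Hs Hr i; rewrite ffunE; case: eqP => [->|]. Qed.

Lemma part1 n (O : finType) (Sg : 'I_n -> {set sorder O})
  (M : profile n O -> {ffun O -> R}) : UnivT Sg M -> StrongT Sg M.
Proof.
move=> [Hr [k [w [f [w0 w1 tf HM]]]]]; split => // s Hs j r' Hr' i.
have Hs' := in_upd Hs Hr'.
set s' := upd s j r'.
have E : forall s0, in_setting Sg s0 ->
  \sum_(l < #|O| | (l <= i)%N) M s0 (ranked (s j) l)
   = \sum_(t < k) (if (rk (s j) (f t s0) <= i)%N then w t else 0).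
  move=> s0 Hs0.
  rewrite (sum_reindex (s j) (fun m => (m <= i)%N)).
  rewrite (eq_bigr (fun x => \sum_(t < k) if f t s0 == x then w t else 0)); last first.
    by move=> x _; rewrite HM // big_mkcond.
  rewrite exchange_big /=; apply: eq_bigr => t _.
  rewrite (eq_bigr (fun x => if x == f t s0 then w t else 0)); last first.
    by move=> x _; rewrite eq_sym.
  exact: sum_pick.
rewrite !E //; apply: ler_sum => t _.
have := wp_rk (tf t s Hs j r' Hr').
case: ifP => H1; case: ifP => H2 //; try by rewrite ?w0.
  by move=> H; rewrite (leq_trans H H1) in H2.
all: by move=> _; rewrite ?w0.
Qed.

Lemma part2 n (O : finType) (Sg : 'I_n -> {set sorder O})
  (M : profile n O -> {ffun O -> R}) : StrongT Sg M -> LexT Sg M.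
Proof.
move=> [Hr HS]; split => // s Hs j r' Hr'.
have Hsd := HS s Hs j r' Hr'.
set p := M s in Hsd *; set q := M (upd s j r') in Hsd *.
have [Epq|Npq] := eqVneq p q; [by left|right].
split; first by apply/eqP.
have [x Hx] : exists x, p x != q x.
  case: (pickP (fun x => p x != q x)) => [x Hx|H]; first by exists x.
  by move: Npq; case/eqP; apply/ffunP => x; have := H x; move/negbFE/eqP.
set r := s j in Hsd *.
have [l0 Hl0] := ranked_surj r x.
pose P := fun l => p (ranked r l) != q (ranked r l).
have Pl0 : P l0 by rewrite /P Hl0.
case: (arg_minnP val Pl0) => i Pi Hmin.
exists i; have Heq : forall l : 'I_#|O|, (l < i)%N -> p (ranked r l) = q (ranked r l).
  move=> l Hl; apply/eqP; apply/negPn/negP => Pl.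
  by have := Hmin l Pl; rewrite leqNgt Hl.
split => //.
have := Hsd i; rewrite !split_sum (eq_bigr (fun l => p (ranked r l))); last first.
  by move=> l Hl; rewrite Heq.
rewrite lerD2l => H; rewrite lt_neqAle H andbT eq_sym; exact: Pi.
Qed.

Lemma part3 n (O : finType) (Sg : 'I_n -> {set sorder O})
  (M : profile n O -> {ffun O -> R}) : LexT Sg M -> WeakT Sg M.
Proof.
move=> [Hr HL]; split => // s Hs j r' Hr' [Hsd Hne].
case: (HL s Hs j r' Hr') => [E|[_ [i [Hi Heq]]]]; first by apply: Hne.
have := Hsd i; rewrite !split_sum (eq_bigr (fun l => M (upd s j r') (ranked (s j) l))); last first.
  by move=> l Hl; rewrite Heq.
by rewrite lerD2l leNgt Hi.
Qed.

End Parts.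

Section Ex.
Variable R : realType.
Local Notation O := ('I_3 : finType).

Definition ic (x : 'I_3) : 'I_#|O| := cast_ord (esym (card_ord 3)) x.
Definition oc (l : 'I_#|O|) : 'I_3 := cast_ord (card_ord 3) l.

Lemma ocK x : oc (ic x) = x. Proof. exact: cast_ordKV. Qed.

Definition cf (k : 'I_3) : {ffun 'I_#|O| -> O} := [ffun l => oc l + k].
Lemma cyc_inj (k : 'I_3) : injectiveb (cf k).
Proof. by apply/injectiveP => l1 l2; rewrite !ffunE => /addIr /cast_ord_inj. Qed.

Definition cyc (k : 'I_3) : sorder O := @exist {ffun 'I_#|O| -> O} (fun f => is_true (injectiveb f)) (cf k) (cyc_inj k).

Lemma ranked_cyc k x : ranked (cyc k) (ic x) = x + k.
Proof. by rewrite /ranked /= /cf ffunE ocK. Qed.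

Lemma rk_cyc k x y : x + k = y -> rk (cyc k) y = x.
Proof. by move=> <-; rewrite (rk_eq (ranked_cyc k x)). Qed.

Definition prof (r : sorder O) : profile 1 O := [ffun _ => r].

Lemma upd_prof (s : profile 1 O) j r' : upd s j r' = prof r'.
Proof. by apply/ffunP => i; rewrite !ffunE (ord1 i) (ord1 j) eqxx. Qed.

Lemma upd0 (s : profile 1 O) j r' : upd s j r' ord0 = r'.
Proof. by rewrite upd_prof ffunE. Qed.

Lemma in_full n (s : profile n O) : in_setting (@full_setting n O) s.
Proof. by move=> j; rewrite in_setT. Qed.

Lemma rk_lt3 (r : sorder O) x : (rk r x < 3)%N.
Proof. by have := rk_lt r x; rewrite card_ord. Qed.

Lemma sum_all (r : sorder O) (F : O -> R) :
  \sum_x F x = \sum_(l < #|O|) F (ranked r l).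
Proof. by rewrite (sum_reindex r xpredT). Qed.

Lemma sum_le1 k (F : 'I_k -> R) (i j : 'I_k) : val i = 1%N -> val j = 0%N ->
  \sum_(l < k | (l <= i)%N) F l = F j + F i.
Proof.
move=> Hi Hj; rewrite split_sum; congr (_ + _).
rewrite (eq_bigl (fun l : 'I_k => (l <= j)%N)); last by move=> l; rewrite Hi Hj.
by rewrite split_sum big_pred0 ?add0r // => l; rewrite Hj ltn0.
Qed.


Definition Ma (s : profile 1 O) : {ffun O -> R} :=
  [ffun x => if (rk (s ord0) x < 2)%N then 1/2 else 0].

Lemma Ma_sum (r : sorder O) :
  \sum_x (if (rk r x < 2)%N then (1/2 : R) else 0) = 1.
Proof.
rewrite (sum_all r) (eq_bigr (fun l : 'I_#|O| => if (l < 2)%N then (1/2 : R) else 0)); last first.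
  by move=> l _; rewrite rkK.
rewrite -(big_mkord xpredT (fun l => if (l < 2)%N then (1/2 : R) else 0)) card_ord.
rewrite big_mkord !big_ord_recr big_ord0 /=; lra.
Qed.

Lemma Ma_rand : rand_mechanism (@full_setting 1 O) Ma.
Proof.
move=> s _; split; first by move=> x; rewrite ffunE; case: ifP => _; lra.
by rewrite -(Ma_sum (s ord0)); apply: eq_bigr => x _; rewrite ffunE.
Qed.

Lemma Ma_strong : StrongT (@full_setting 1 O) Ma.
Proof.
split; first exact: Ma_rand.
move=> s _ j r' _ i; rewrite (ord1 j); set r := s ord0.
have Hq : forall x, Ma (upd s ord0 r') x <= 1/2.
  by move=> x; rewrite ffunE; case: ifP => _; lra.
have Hq0 : forall x, 0 <= Ma (upd s ord0 r') x.
  by move=> x; rewrite ffunE; case: ifP => _; lra.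
case: (posnP (val i)) => Hi.
  rewrite !split_sum !big_pred0 ?add0r; try by move=> l; rewrite Hi ltn0.
  by rewrite [X in _ <= X]ffunE rkK Hi /=; apply: Hq.
have -> : \sum_(l < #|O| | (l <= i)%N) Ma s (ranked (s ord0) l) = 1.
  have := Ma_sum r; rewrite (sum_all r) (bigID (fun l : 'I_#|O| => (l <= i)%N)) /=.
  rewrite [X in _ + X = _]big1 ?addr0.
    by move=> <-; apply: eq_bigr => l _; rewrite ffunE.
  move=> l; rewrite -ltnNge rkK => Hl; case: ifP => // Hl2.
  by move: Hi Hl Hl2; case: l => [[|[|l]]] //=; case: i => [[|[|ii]]].
rewrite -(Ma_rand (in_full (upd s ord0 r'))).2 (sum_all r).
exact: sum_le_total.
Qed.


Lemma Ma_notU : ~ UnivT (@full_setting 1 O) Ma.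
Proof.
move=> [_ [k [w [f [w0 w1 tf HM]]]]].
pose A t (kk : 'I_3) := f t (prof (cyc kk)) == 1 + kk.
have Hexcl : forall t kk, A t kk -> ~~ A t (kk + 2).
  move=> t kk /eqP H1; apply/negP => /eqP H2.
  have := wp_rk (tf t (prof (cyc kk)) (in_full _) ord0 (cyc (kk + 2)) (in_setT _)).
  rewrite upd_prof ffunE H1 H2 (rk_cyc (x := 1)) // (rk_cyc (x := 0)) //.
  by case: kk {H1 H2} => [[|[|[|]]]] // ?; apply/val_inj.
have HS : forall kk, \sum_(t < k) (if A t kk then w t else 0) = 1/2.
  move=> kk; rewrite -big_mkcond -HM; last exact: in_full.
  by rewrite ffunE ffunE (rk_cyc (x := 1)).
have := HS 0; have := HS 1; have := HS 2.
have : \sum_(t < k) ((if A t 0 then w t else 0) + (if A t 1 then w t else 0)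
   + (if A t 2 then w t else 0)) <= 1.
  rewrite -w1; apply: ler_sum => t _.
  have E1 : (1 + 2 : 'I_3) = 0 by apply/val_inj.
  have E2 : (2 + 2 : 'I_3) = 1 by apply/val_inj.
  have H0 := Hexcl t 0; have H1 := Hexcl t 1; have H2 := Hexcl t 2.
  rewrite add0r E1 in H0 H1; rewrite E2 in H2.
  have := w0 t.
  case: (A t 0) H0 H1; case: (A t 1) H2; case: (A t 2) => //= *; lra.
rewrite !big_split /=; lra.
Qed.


Definition Lb (t : 'I_3) : {ffun O -> R} :=
  [ffun x => if t == 0 then (if x == 0 then 1/2 else 0) + (if x == 2 then 1/2 else 0)
             else (if x == t then 1 else 0)].
Definition Mb (s : profile 1 O) : {ffun O -> R} := Lb (ranked (s ord0) (ic 0)).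

Lemma sum_pick_all (a : O) (v : R) : \sum_x (if x == a then v else 0) = v.
Proof. by rewrite (bigD1 a) //= eqxx big1 ?addr0 // => x /negbTE ->. Qed.

Lemma Lb_lot t : lottery (Lb t).
Proof.
split.
  move=> x; rewrite ffunE; case: ifP => _; repeat case: ifP => _; lra.
under eq_bigr do rewrite ffunE.
case: (t == 0).
  rewrite big_split /= !sum_pick_all; lra.
by rewrite sum_pick_all.
Qed.

Lemma Lb_lt (t t' : 'I_3) : t != t' -> Lb t' t < Lb t t.
Proof.
rewrite !ffunE.
move: t t' => [[|[|[|]]] Ht] // [[|[|[|]]] Ht'] //= _; lra.
Qed.

Lemma Mb_lex : LexT (@full_setting 1 O) Mb.
Proof.
split; first by move=> s _; apply: Lb_lot.
move=> s _ j r' _; rewrite (ord1 j) /Mb upd0.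
set t := ranked (s ord0) (ic 0); set t' := ranked r' (ic 0).
have [E|N] := eqVneq t t'; first by left; rewrite E.
right; have H := Lb_lt N; split.
  by move=> E; rewrite E in H; rewrite ltxx in H.
by exists (ic 0); split => // l; rewrite ltn0.
Qed.

Lemma Mb_notS : ~ StrongT (@full_setting 1 O) Mb.
Proof.
move=> [_ H]; have := H (prof (cyc 0)) (in_full _) ord0 (cyc 1) (in_setT _) (ic 1).
rewrite (sum_le1 _ (i := ic 1) (j := ic 0)) // (sum_le1 _ (i := ic 1) (j := ic 0)) //.
rewrite /Mb upd_prof !ffunE !ranked_cyc !addr0 add0r.
move=> ?; lra.
Qed.


Definition Mc (s : profile 1 O) : {ffun O -> R} :=
  if (rk (s ord0) 1%R <= 1)%N then Lb 1 else Lb 0.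

Lemma pre_Lb0 (r : sorder O) (i : 'I_#|O|) :
  \sum_(l < #|O| | (l <= i)%N) Lb 0 (ranked r l) =
  (if (rk r 0%R <= i)%N then 1/2 else 0) + (if (rk r 2%R <= i)%N then 1/2 else 0).
Proof.
rewrite (sum_reindex r (fun m => m <= i)%N).
under eq_bigr do rewrite ffunE /=.
by rewrite big_split /= !sum_pick.
Qed.

Lemma pre_Lb1 (r : sorder O) (i : 'I_#|O|) :
  \sum_(l < #|O| | (l <= i)%N) Lb 1 (ranked r l) =
  (if (rk r 1%R <= i)%N then 1 else 0).
Proof.
rewrite (sum_reindex r (fun m => m <= i)%N).
under eq_bigr do rewrite ffunE /=.
by rewrite sum_pick.
Qed.

Lemma Mc_weak : WeakT (@full_setting 1 O) Mc.
Proof.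
split; first by move=> s _; rewrite /Mc; case: ifP => _; apply: Lb_lot.
move=> s _ j r' _; rewrite (ord1 j) /Mc upd0; set r := s ord0.
have D01 : rk r 0%R != rk r 1%R by apply/eqP => /rk_inj.
have D02 : rk r 0%R != rk r 2%R by apply/eqP => /rk_inj.
have D12 : rk r 1%R != rk r 2%R by apply/eqP => /rk_inj.
have L0 := rk_lt3 r 0; have L1 := rk_lt3 r 1; have L2 := rk_lt3 r 2.
case h1: (rk r 1%R <= 1)%N; case h2: (rk r' 1%R <= 1)%N => -[Hsd Hne] //.
  have := Hsd (Ordinal (rk_lt r 1)); rewrite pre_Lb0 pre_Lb1 /= leqnn.
  move: D01 D02 D12; case: ifP => a0; case: ifP => a2 => D01 D02 D12; try lra.
  exfalso; move: D01 D02 D12 => /eqP ? /eqP ? /eqP ?; lia.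
have := Hsd (ic 1); rewrite pre_Lb0 pre_Lb1 /= h1.
have -> : (rk r 0%R <= 1)%N by move: D01 => /eqP; lia.
have -> : (rk r 2%R <= 1)%N by move: D12 => /eqP; lia.
lra.
Qed.

Lemma Mc_notL : ~ LexT (@full_setting 1 O) Mc.
Proof.
move=> [_ H]; have := H (prof (cyc 0)) (in_full _) ord0 (cyc 2) (in_setT _).
rewrite /Mc upd_prof !ffunE (rk_cyc (x := 1)) ?addr0 // (rk_cyc (x := 2)); last by apply/val_inj.
rewrite /=.
case=> [E|[_ [i [Hi Heq]]]].
  by have := congr1 (fun f : {ffun O -> R} => f 0) E; rewrite !ffunE /=; lra.
case: (posnP (val i)) => Hv.
  have Ei : i = ic 0 by apply/val_inj; rewrite Hv.
  by move: Hi; rewrite Ei ranked_cyc addr0 !ffunE /=; lra.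
have := Heq (ic 0) Hv; rewrite ranked_cyc addr0 !ffunE /=; lra.
Qed.

End Ex.

Theorem theorem3 (R : realType) :
  (* the inclusions hold in every ordinal setting *)
  (forall n (O : finType) (Sg : 'I_n -> {set sorder O})
          (M : profile n O -> {ffun O -> R}),
     UnivT Sg M -> StrongT Sg M) /\
  (forall n (O : finType) (Sg : 'I_n -> {set sorder O})
          (M : profile n O -> {ffun O -> R}),
     StrongT Sg M -> LexT Sg M) /\
  (forall n (O : finType) (Sg : 'I_n -> {set sorder O})
          (M : profile n O -> {ffun O -> R}),
     LexT Sg M -> WeakT Sg M) /\
  (* each inclusion is strict, witnessed in a full setting *)
  (exists n (O : finType) (M : profile n O -> {ffun O -> R}),
     StrongT (@full_setting n O) M /\ ~ UnivT (@full_setting n O) M) /\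
  (exists n (O : finType) (M : profile n O -> {ffun O -> R}),
     LexT (@full_setting n O) M /\ ~ StrongT (@full_setting n O) M) /\
  (exists n (O : finType) (M : profile n O -> {ffun O -> R}),
     WeakT (@full_setting n O) M /\ ~ LexT (@full_setting n O) M).
Proof.
split; first exact: part1.
split; first exact: part2.
split; first exact: part3.
split; first by exists 1%N, ('I_3 : finType), (@Ma R); split; [apply: Ma_strong|apply: Ma_notU].
split; first by exists 1%N, ('I_3 : finType), (@Mb R); split; [apply: Mb_lex|apply: Mb_notS].
by exists 1%N, ('I_3 : finType), (@Mc R); split; [apply: Mc_weak|apply: Mc_notL].
Qed.
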